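(* Assume $c_1>c_2>0$ and $\sigma_0\sigma_1\neq0$. Let $\delta>0$ be sufficiently small, and let $\Phi\in B^6_{2\delta}(0)$ with $\phi_2^2+\phi_3^2>0$. Then the following identities hold. - For $i\in\{1,6\}$: $\gamma^i_{23}+\gamma^i_{32}=0$ and $\gamma^i_{45}+\gamma^i_{54}=0$. - For $i=3$: $-c^3_{32}+\gamma^3_{32}=0$ and $\gamma^3_{45}+\gamma^3_{54}=0$. - For $i=4$: $-c^4_{45}+\gamma^4_{45}=0$ and $\gamma^4_{23}+\gamma^4_{32}=0$. In other words, in the decomposed equations for $w^1,w^3,w^4,w^6$ the terms $w^2w^3$ and $w^4w^5$ do not appear. Moreover, there is a constant $C$ such that each of the four quantities $$-c^2_{23}+\gamma^2_{23},\qquad \gamma^2_{45}+\gamma^2_{54},\qquad -c^5_{54}+\gamma^5_{54},\qquad \gamma^5_{23}+\gamma^5_{32}$$ has absolute value at most $C|\lambda_2(\Phi)-\lambda_3(\Phi)|$ on this set. That is, in the equations for $w^2,w^5$ the coefficients of $w^2w^3$ and $w^4w^5$ carry a factor $\lambda_2-\lambda_3$.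
   Context: Set $$a=c_1^2+2\sigma_0\phi_1,\quad b=c_2^2+2\sigma_1\phi_1,\quad c=2\sigma_1\phi_2,\quad d=2\sigma_1\phi_3,\quad \Delta=(a-b)^2+4(c^2+d^2).$$ Eigenvalues: $$\lambda_1=-\lambda_6=\sqrt{\tfrac12(a+b)+\tfrac12\sqrt\Delta},\qquad\lambda_2=-\lambda_5=\sqrt b,\qquad\lambda_3=-\lambda_4=\sqrt{\tfrac12(a+b)-\tfrac12\sqrt\Delta}.$$ Right eigenvectors (column vectors): $$r_1=\big(\tfrac{\lambda_1^2-b}{2\sigma_1},\phi_2,\phi_3,-\tfrac{\lambda_1(\lambda_1^2-b)}{2\sigma_1},-\lambda_1\phi_2,-\lambda_1\phi_3\big),$$ $$r_2=(0,\phi_3,-\phi_2,0,-\lambda_2\phi_3,\lambda_2\phi_2),$$ $$r_3=\big(\tfrac{\lambda_3^2-b}{2\sigma_1},\phi_2,\phi_3,-\tfrac{\lambda_3(\lambda_3^2-b)}{2\sigma_1},-\lambda_3\phi_2,-\lambda_3\phi_3\big),$$ $$r_4=\big(\tfrac{\lambda_3^2-b}{2\sigma_1},\phi_2,\phi_3,\tfrac{\lambda_3(\lambda_3^2-b)}{2\sigma_1},\lambda_3\phi_2,\lambda_3\phi_3\big),$$ $$r_5=(0,\phi_3,-\phi_2,0,\lambda_2\phi_3,-\lambda_2\phi_2),$$ $$r_6=\big(\tfrac{\lambda_1^2-b}{2\sigma_1},\phi_2,\phi_3,\tfrac{\lambda_1(\lambda_1^2-b)}{2\sigma_1},\lambda_1\phi_2,\lambda_1\phi_3\big).$$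 Left eigenvectors (row vectors): $$l^1=\tfrac1K\big(\tfrac{\lambda_1^2-b}{2\sigma_1},\phi_2,\phi_3,-\tfrac{\lambda_1^2-b}{2\sigma_1\lambda_1},-\tfrac{\phi_2}{\lambda_1},-\tfrac{\phi_3}{\lambda_1}\big),$$ $$l^2=\tfrac1M\big(0,\phi_3,-\phi_2,0,-\tfrac{\phi_3}{\lambda_2},\tfrac{\phi_2}{\lambda_2}\big),$$ $$l^3=\tfrac1N\big(\tfrac{\lambda_3^2-b}{2\sigma_1},\phi_2,\phi_3,-\tfrac{\lambda_3^2-b}{2\sigma_1\lambda_3},-\tfrac{\phi_2}{\lambda_3},-\tfrac{\phi_3}{\lambda_3}\big),$$ $$l^4=\tfrac1N\big(\tfrac{\lambda_3^2-b}{2\sigma_1},\phi_2,\phi_3,\tfrac{\lambda_3^2-b}{2\sigma_1\lambda_3},\tfrac{\phi_2}{\lambda_3},\tfrac{\phi_3}{\lambda_3}\big),$$ $$l^5=\tfrac1M\big(0,\phi_3,-\phi_2,0,\tfrac{\phi_3}{\lambda_2},-\tfrac{\phi_2}{\lambda_2}\big),$$ $$l^6=\tfrac1K\big(\tfrac{\lambda_1^2-b}{2\sigma_1},\phi_2,\phi_3,\tfrac{\lambda_1^2-b}{2\sigma_1\lambda_1},\tfrac{\phi_2}{\lambda_1},\tfrac{\phi_3}{\lambda_1}\big),$$ where $$K=\tfrac{\Delta+(a-b)\sqrt\Delta}{4\sigma_1^2},\qquad M=2(\phi_2^2+\phi_3^2),\qquad N=\tfrac{\Delta-(a-b)\sqrt\Delta}{4\sigma_1^2},$$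 so that $l^ir_j=\delta^i_j$. Coefficients: $c^i_{im}=\nabla_\Phi\lambda_i\cdot r_m$. For vector fields $r,s$ on $\mathbb{R}^6$, let $\nabla_\Phi r\cdot s=\sum_j s_j\,\partial_{\phi_j}r$ denote the derivative of $r$ in direction $s$. For $m\neq i$: $$\gamma^i_{im}=-(\lambda_i-\lambda_m)\,l^i\cdot(\nabla_\Phi r_i\cdot r_m-\nabla_\Phi r_m\cdot r_i).$$ For $k\neq i$ and $m\neq i$: $$\gamma^i_{km}=-(\lambda_k-\lambda_m)\,l^i\cdot(\nabla_\Phi r_k\cdot r_m).$$ These are the coefficients of the wave decomposition $w^i=l^i\partial_x\Phi$: $$(\partial_t+\lambda_i\partial_x)w^i=-c^i_{ii}(w^i)^2+\sum_{m\neq i}(-c^i_{im}+\gamma^i_{im})w^mw^i+\sum_{m\ne i,\,k\ne i,\,m\ne k}\gamma^i_{km}w^kw^m.$$ *)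

(* Defs.v *)
From Stdlib Require Import Reals Lra ClassicalEpsilon.
Open Scope R_scope.

(* A point Phi of R^6 is represented as a function nat -> R; only the
   components 1..6 (phi_1,...,phi_6) are ever used. *)
Definition pt := nat -> R.

Definition sum6 (f : nat -> R) : R := f 1%nat + f 2%nat + f 3%nat + f 4%nat + f 5%nat + f 6%nat.

Definition dot6 (u v : pt) : R := sum6 (fun j => u j * v j).

Definition norm6 (P : pt) : R := sqrt (sum6 (fun j => P j ^ 2)).

Definition vec6 (x1 x2 x3 x4 x5 x6 : R) : pt :=
  fun j => match j with
           | 1%nat => x1 | 2%nat => x2 | 3%nat => x3
           | 4%nat => x4 | 5%nat => x5 | 6%nat => x6 | _ => 0 end.

Definition shift (P : pt) (j : nat) (t : R) : pt :=
  fun k => if Nat.eqb k j then P k + t else P k.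

Definition pd (f : pt -> R) (P : pt) (j : nat) : R :=
  epsilon (inhabits 0) (fun l => derivable_pt_lim (fun t => f (shift P j t)) 0 l).

Section Sys.
Variables (c1 c2 s0 s1 : R).

Definition a_ (P : pt) : R := c1 ^ 2 + 2 * s0 * P 1%nat.
Definition b_ (P : pt) : R := c2 ^ 2 + 2 * s1 * P 1%nat.
Definition c_ (P : pt) : R := 2 * s1 * P 2%nat.
Definition d_ (P : pt) : R := 2 * s1 * P 3%nat.
Definition Delta (P : pt) : R :=
  (a_ P - b_ P) ^ 2 + 4 * (c_ P ^ 2 + d_ P ^ 2).

Definition lam1 (P : pt) : R := sqrt ((a_ P + b_ P) / 2 + sqrt (Delta P) / 2).
Definition lam2 (P : pt) : R := sqrt (b_ P).
Definition lam3 (P : pt) : R := sqrt ((a_ P + b_ P) / 2 - sqrt (Delta P) / 2).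

Definition lam (i : nat) (P : pt) : R :=
  match i with
  | 1%nat => lam1 P | 2%nat => lam2 P | 3%nat => lam3 P
  | 4%nat => - lam3 P | 5%nat => - lam2 P | 6%nat => - lam1 P | _ => 0 end.

Definition Kc (P : pt) : R := (Delta P + (a_ P - b_ P) * sqrt (Delta P)) / (4 * s1 ^ 2).
Definition Mc (P : pt) : R := 2 * (P 2%nat ^ 2 + P 3%nat ^ 2).
Definition Nc (P : pt) : R := (Delta P - (a_ P - b_ P) * sqrt (Delta P)) / (4 * s1 ^ 2).

(* right eigenvector of the family with eigenvalue mu = lambda_1 or lambda_3,
   sign e = -1 (for r_1, r_3) or +1 (for r_4, r_6); written with |mu| *)
Definition rA (mu e : R) (P : pt) : pt :=
  let q := (mu ^ 2 - b_ P) / (2 * s1) in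
  vec6 q (P 2%nat) (P 3%nat) (e * mu * q) (e * mu * P 2%nat) (e * mu * P 3%nat).

Definition r (i : nat) (P : pt) : pt :=
  match i with
  | 1%nat => rA (lam1 P) (-1) P
  | 2%nat => vec6 0 (P 3%nat) (- P 2%nat) 0 (- lam2 P * P 3%nat) (lam2 P * P 2%nat)
  | 3%nat => rA (lam3 P) (-1) P
  | 4%nat => rA (lam3 P) 1 P
  | 5%nat => vec6 0 (P 3%nat) (- P 2%nat) 0 (lam2 P * P 3%nat) (- lam2 P * P 2%nat)
  | 6%nat => rA (lam1 P) 1 P
  | _ => fun _ => 0 end.

Definition lA (mu e Z : R) (P : pt) : pt :=
  let q := (mu ^ 2 - b_ P) / (2 * s1) in
  vec6 (q / Z) (P 2%nat / Z) (P 3%nat / Z)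
       (e * (q / mu) / Z) (e * (P 2%nat / mu) / Z) (e * (P 3%nat / mu) / Z).

Definition l (i : nat) (P : pt) : pt :=
  match i with
  | 1%nat => lA (lam1 P) (-1) (Kc P) P
  | 2%nat => vec6 0 (P 3%nat / Mc P) (- P 2%nat / Mc P) 0
                  (- (P 3%nat / lam2 P) / Mc P) ((P 2%nat / lam2 P) / Mc P)
  | 3%nat => lA (lam3 P) (-1) (Nc P) P
  | 4%nat => lA (lam3 P) 1 (Nc P) P
  | 5%nat => vec6 0 (P 3%nat / Mc P) (- P 2%nat / Mc P) 0
                  ((P 3%nat / lam2 P) / Mc P) (- (P 2%nat / lam2 P) / Mc P)
  | 6%nat => lA (lam1 P) 1 (Kc P) P
  | _ => fun _ => 0 end.

Definition dirD (rf sf : pt -> pt) (P : pt) : pt :=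
  fun k => sum6 (fun j => sf P j * pd (fun Q => rf Q k) P j).

Definition ccoef (i m : nat) (P : pt) : R :=
  sum6 (fun j => pd (lam i) P j * r m P j).

Definition gamma (i k m : nat) (P : pt) : R :=
  if Nat.eqb k i then
    - (lam i P - lam m P) *
      dot6 (l i P) (fun n => dirD (r i) (r m) P n - dirD (r m) (r i) P n)
  else
    - (lam k P - lam m P) * dot6 (l i P) (dirD (r k) (r m) P).

End Sys.

(* Main.v *)
Require Import Defs.
From Stdlib Require Import Reals Lra ClassicalEpsilon.
From Coquelicot Require Import Coquelicot.
Open Scope R_scope.

Lemma pd_is_derive f P j l : is_derive (fun t => f (shift P j t)) 0 l -> pd f P j = l.
Proof.
  intros H. apply is_derive_Reals in H. unfold pd.
  apply (uniqueness_limite (fun t => f (shift P j t)) 0).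
  - apply epsilon_spec. exists l. exact H.
  - exact H.
Qed.

Lemma is_derive_val (f : R -> R) x l l' : is_derive f x l -> l = l' -> is_derive f x l'.
Proof. intros H ->; exact H. Qed.

Lemma pd_const f P j (F : R -> R -> R -> R) :
  (forall Q, f Q = F (Q 1%nat) (Q 2%nat) (Q 3%nat)) -> (j = 4 \/ j = 5 \/ j = 6)%nat -> pd f P j = 0.
Proof.
  intros Hf Hj. apply pd_is_derive.
  apply is_derive_ext with (f := fun _ => f P); [|apply (is_derive_const (f P) 0)].
  intro t. rewrite !Hf. destruct Hj as [ -> | [ -> | -> ] ]; reflexivity.
Qed.

Lemma rotder (h : R -> R) (h' y z a b c S0: R) :
  S0 = y^2+z^2 -> is_derive h S0 h' ->
  is_derive (fun t => h ((y+t)^2+z^2) * (a+b*(y+t)+c*z)) 0 (h'*(2*y)*(a+b*y+c*z) + h S0 * b).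
Proof.
  intros HS Hh.
  assert (H1: is_derive (fun t => (y+t)^2+z^2) 0 (2*y)).
  { auto_derive; [auto| ring]. }
  replace S0 with ((y+0)^2+z^2) in Hh by (subst; ring).
  assert (H2 := is_derive_comp h (fun t => (y+t)^2+z^2) 0 h' (2*y) Hh H1).
  assert (H3: is_derive (fun t => (a+b*(y+t)+c*z)) 0 b).
  { auto_derive; [auto| ring]. }
  assert (H4 := is_derive_mult _ _ _ _ _ H2 H3 Rmult_comm).
  simpl in H4.
  replace (h'*(2*y)*(a+b*y+c*z) + h S0 * b) with
    (plus (mult (scal (2 * y) h') (a + b * (y + 0) + c * z)) (mult (h ((y + 0) ^ 2 + z ^ 2)) b)).
  exact H4.
  rewrite Rplus_0_r, <- HS. unfold plus, mult, scal; simpl. unfold mult; simpl. ring.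
Qed.

Lemma rotderz (h : R -> R) (h' y z a b c S0: R) :
  S0 = y^2+z^2 -> is_derive h S0 h' ->
  is_derive (fun t => h (y^2+(z+t)^2) * (a+b*y+c*(z+t))) 0 (h'*(2*z)*(a+b*y+c*z) + h S0 * c).
Proof.
  intros HS Hh.
  assert (H1: is_derive (fun t => y^2+(z+t)^2) 0 (2*z)).
  { auto_derive; [auto| ring]. }
  replace S0 with (y^2+(z+0)^2) in Hh by (subst; ring).
  assert (H2 := is_derive_comp h (fun t => y^2+(z+t)^2) 0 h' (2*z) Hh H1).
  assert (H3: is_derive (fun t => (a+b*y+c*(z+t))) 0 c).
  { auto_derive; [auto| ring]. }
  assert (H4 := is_derive_mult _ _ _ _ _ H2 H3 Rmult_comm).
  simpl in H4.
  replace (h'*(2*z)*(a+b*y+c*z) + h S0 * c) with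
    (plus (mult (scal (2 * z) h') (a + b * y + c * (z + 0))) (mult (h (y ^ 2 + (z + 0) ^ 2)) c)).
  exact H4.
  rewrite Rplus_0_r, <- HS. unfold plus, mult, scal; simpl. unfold mult; simpl. ring.
Qed.

Lemma rot_sum (g : pt -> R) (H : R -> R -> R) al be ga (P v : pt) :
  (forall Q, g Q = H (Q 1%nat) (Q 2%nat ^2 + Q 3%nat ^2) * (al + be * Q 2%nat + ga * Q 3%nat)) ->
  ex_derive (H (P 1%nat)) (P 2%nat ^2 + P 3%nat ^2) ->
  v 1%nat = 0 -> v 2%nat = P 3%nat -> v 3%nat = - P 2%nat -> v 4%nat = 0 ->
  sum6 (fun j => v j * pd g P j) = H (P 1%nat) (P 2%nat ^2 + P 3%nat ^2) * (be * P 3%nat - ga * P 2%nat).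
Proof.
  intros Hg [h' Hh] H1 H2 H3 H4.
  assert (E2 : pd g P 2 = h'*(2*P 2%nat)*(al+be*P 2%nat+ga*P 3%nat) + H (P 1%nat) (P 2%nat ^2 + P 3%nat ^2) * be).
  { apply pd_is_derive.
    eapply is_derive_ext; [| apply (rotder (H (P 1%nat))); [reflexivity | exact Hh]].
    intro t. rewrite Hg. reflexivity. }
  assert (E3 : pd g P 3 = h'*(2*P 3%nat)*(al+be*P 2%nat+ga*P 3%nat) + H (P 1%nat) (P 2%nat ^2 + P 3%nat ^2) * ga).
  { apply pd_is_derive.
    eapply is_derive_ext; [| apply (rotderz (H (P 1%nat))); [reflexivity | exact Hh]].
    intro t. rewrite Hg. reflexivity. }
  assert (E5 : pd g P 5 = 0).
  { apply (pd_const _ _ _ (fun a b c => H a (b^2+c^2) * (al+be*b+ga*c))); auto. }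
  assert (E6 : pd g P 6 = 0).
  { apply (pd_const _ _ _ (fun a b c => H a (b^2+c^2) * (al+be*b+ga*c))); auto. }
  unfold sum6. rewrite E2, E3, E5, E6, H1, H2, H3, H4. ring.
Qed.

Lemma lin_sum (g : pt -> R) (K : R -> R) al be ga (P v : pt) k' :
  (forall Q, g Q = K (Q 1%nat) * (al + be * Q 2%nat + ga * Q 3%nat)) ->
  is_derive K (P 1%nat) k' ->
  sum6 (fun j => v j * pd g P j) =
   v 1%nat * (k' * (al + be * P 2%nat + ga * P 3%nat)) + v 2%nat * (K (P 1%nat) * be) + v 3%nat * (K (P 1%nat) * ga).
Proof.
  intros Hg Hk.
  assert (E1 : pd g P 1 = k' * (al + be * P 2%nat + ga * P 3%nat)).
  { apply pd_is_derive.
    assert (Hi : is_derive (fun t => P 1%nat + t) 0 1) by (auto_derive; [auto|ring]).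
    replace (P 1%nat) with (P 1%nat + 0) in Hk by ring.
    assert (Hc := is_derive_comp K _ 0 _ _ Hk Hi).
    assert (Hm := is_derive_mult _ (fun _ => al + be * P 2%nat + ga * P 3%nat) _ _ _ Hc
                    (is_derive_const _ 0) Rmult_comm).
    eapply is_derive_ext; [|eapply is_derive_val; [exact Hm|]].
    - intro t. rewrite Hg. reflexivity.
    - simpl. unfold plus, mult, scal, zero; simpl. unfold mult; simpl. ring. }
  assert (E2 : pd g P 2 = K (P 1%nat) * be).
  { apply pd_is_derive.
    eapply is_derive_ext with (f := fun t => K (P 1%nat) * (al + be * (P 2%nat + t) + ga * P 3%nat)).
    - intro t. rewrite Hg. reflexivity.
    - auto_derive; [auto|ring]. }
  assert (E3 : pd g P 3 = K (P 1%nat) * ga).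
  { apply pd_is_derive.
    eapply is_derive_ext with (f := fun t => K (P 1%nat) * (al + be * P 2%nat + ga * (P 3%nat + t))).
    - intro t. rewrite Hg. reflexivity.
    - auto_derive; [auto|ring]. }
  assert (E4 : pd g P 4 = 0).
  { apply (pd_const _ _ _ (fun a b c => K a * (al+be*b+ga*c))); auto. }
  assert (E5 : pd g P 5 = 0).
  { apply (pd_const _ _ _ (fun a b c => K a * (al+be*b+ga*c))); auto. }
  assert (E6 : pd g P 6 = 0).
  { apply (pd_const _ _ _ (fun a b c => K a * (al+be*b+ga*c))); auto. }
  unfold sum6. rewrite E1, E2, E3, E4, E5, E6. ring.
Qed.

Definition Af c1 s0 x := c1^2 + 2*s0*x.
Definition Bf c2 s1 x := c2^2 + 2*s1*x.
Definition DDf c1 c2 s0 s1 x S := (Af c1 s0 x - Bf c2 s1 x)^2 + 16*s1^2*S.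
Definition L3f c1 c2 s0 s1 x S := sqrt ((Af c1 s0 x + Bf c2 s1 x)/2 - sqrt (DDf c1 c2 s0 s1 x S)/2).

Lemma Delta_eq c1 c2 s0 s1 Q : Defs.Delta c1 c2 s0 s1 Q = DDf c1 c2 s0 s1 (Q 1%nat) (Q 2%nat ^2 + Q 3%nat ^2).
Proof. unfold Defs.Delta, DDf, a_, b_, c_, d_, Af, Bf. ring. Qed.

Lemma lam3_eq c1 c2 s0 s1 Q : lam3 c1 c2 s0 s1 Q = L3f c1 c2 s0 s1 (Q 1%nat) (Q 2%nat ^2 + Q 3%nat ^2).
Proof. unfold lam3. rewrite Delta_eq. reflexivity. Qed.

Lemma L3_ex c1 c2 s0 s1 x S0 :
  0 < DDf c1 c2 s0 s1 x S0 ->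
  0 < (Af c1 s0 x + Bf c2 s1 x)/2 - sqrt (DDf c1 c2 s0 s1 x S0)/2 ->
  ex_derive (L3f c1 c2 s0 s1 x) S0.
Proof.
  intros H1 H2. unfold L3f. unfold DDf in *. auto_derive. split; [exact H1|]. split; [exact H2|]. auto.
Qed.

Lemma dirD_rot c1 c2 s0 s1 (e : R) (n : nat) (P v : pt) :
  0 < DDf c1 c2 s0 s1 (P 1%nat) (P 2%nat ^2 + P 3%nat ^2) ->
  0 < (Af c1 s0 (P 1%nat) + Bf c2 s1 (P 1%nat))/2 - sqrt (DDf c1 c2 s0 s1 (P 1%nat) (P 2%nat ^2 + P 3%nat ^2))/2 ->
  v 1%nat = 0 -> v 2%nat = P 3%nat -> v 3%nat = - P 2%nat -> v 4%nat = 0 ->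
  sum6 (fun j => v j * pd (fun Q => rA c2 s1 (lam3 c1 c2 s0 s1 Q) e Q n) P j)
  = vec6 0 (P 3%nat) (- P 2%nat) 0 (e * lam3 c1 c2 s0 s1 P * P 3%nat) (- (e * lam3 c1 c2 s0 s1 P * P 2%nat)) n.
Proof.
  intros HD HA H1 H2 H3 H4.
  assert (HL := L3_ex c1 c2 s0 s1 _ _ HD HA).
  set (L := L3f c1 c2 s0 s1).
  set (q := fun x S => (L x S ^ 2 - Bf c2 s1 x) / (2 * s1)).
  destruct n as [|[|[|[|[|[|[|n]]]]]]];
  [ rewrite (rot_sum _ (fun _ _ => 0) 0 0 0 P v)
  | rewrite (rot_sum _ q 1 0 0 P v)
  | rewrite (rot_sum _ (fun _ _ => 1) 0 1 0 P v)
  | rewrite (rot_sum _ (fun _ _ => 1) 0 0 1 P v)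
  | rewrite (rot_sum _ (fun x S => e * L x S * q x S) 1 0 0 P v)
  | rewrite (rot_sum _ (fun x S => e * L x S) 0 1 0 P v)
  | rewrite (rot_sum _ (fun x S => e * L x S) 0 0 1 P v)
  | rewrite (rot_sum _ (fun _ _ => 0) 0 0 0 P v) ]; auto;
  try (intro Q; unfold rA, vec6, q, L; cbv beta iota zeta; rewrite ?lam3_eq; unfold b_, Bf; ring; fail);
  try (unfold q, L; auto_derive; repeat split; auto; fail);
  try (cbv beta iota zeta delta [vec6]; rewrite ?lam3_eq; unfold L; ring).
Qed.

Lemma dK2 c2 s1 x : 0 < Bf c2 s1 x -> is_derive (fun x => sqrt (c2^2 + 2*s1*x)) x (s1 / sqrt (c2^2 + 2*s1*x)).
Proof. intros H. unfold Bf in H. auto_derive; replace (c2*(c2*1)) with (c2^2) by ring; [auto| field; apply Rgt_not_eq, sqrt_lt_R0; auto]. Qed.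

Lemma dK2n c2 s1 x : 0 < Bf c2 s1 x -> is_derive (fun x => - sqrt (c2^2 + 2*s1*x)) x (- (s1 / sqrt (c2^2 + 2*s1*x))).
Proof. intros H. unfold Bf in H. auto_derive; replace (c2*(c2*1)) with (c2^2) by ring; [auto| field; apply Rgt_not_eq, sqrt_lt_R0; auto]. Qed.

Ltac lin_tac :=
  try (intro Q; cbv beta iota zeta delta [r vec6]; unfold lam2, b_; ring; fail);
  try (exact (is_derive_const _ _); fail);
  try (apply dK2; assumption);
  try (apply dK2n; assumption);
  try (cbv beta iota zeta delta [vec6]; unfold lam2, b_; ring).

Lemma dirD_lin2 c1 c2 s0 s1 (n : nat) (P v : pt) :
  0 < Bf c2 s1 (P 1%nat) ->
  sum6 (fun j => v j * pd (fun Q => r c1 c2 s0 s1 2 Q n) P j)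
  = vec6 0 (v 3%nat) (- v 2%nat) 0 (-(v 1%nat * (s1 / lam2 c2 s1 P)) * P 3%nat - lam2 c2 s1 P * v 3%nat)
      (v 1%nat * (s1 / lam2 c2 s1 P) * P 2%nat + lam2 c2 s1 P * v 2%nat) n.
Proof.
  intros HB.
  destruct n as [|[|[|[|[|[|[|n]]]]]]];
  [ rewrite (lin_sum _ (fun _ => 0) 0 0 0 P v 0)
  | rewrite (lin_sum _ (fun _ => 0) 0 0 0 P v 0)
  | rewrite (lin_sum _ (fun _ => 1) 0 0 1 P v 0)
  | rewrite (lin_sum _ (fun _ => 1) 0 (-1) 0 P v 0)
  | rewrite (lin_sum _ (fun _ => 0) 0 0 0 P v 0)
  | rewrite (lin_sum _ (fun x => - sqrt (c2^2 + 2*s1*x)) 0 0 1 P v (- (s1 / lam2 c2 s1 P)))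
  | rewrite (lin_sum _ (fun x => sqrt (c2^2 + 2*s1*x)) 0 1 0 P v (s1 / lam2 c2 s1 P))
  | rewrite (lin_sum _ (fun _ => 0) 0 0 0 P v 0) ]; lin_tac.
Qed.

Lemma dirD_lin5 c1 c2 s0 s1 (n : nat) (P v : pt) :
  0 < Bf c2 s1 (P 1%nat) ->
  sum6 (fun j => v j * pd (fun Q => r c1 c2 s0 s1 5 Q n) P j)
  = vec6 0 (v 3%nat) (- v 2%nat) 0 (v 1%nat * (s1 / lam2 c2 s1 P) * P 3%nat + lam2 c2 s1 P * v 3%nat)
      (-(v 1%nat * (s1 / lam2 c2 s1 P)) * P 2%nat - lam2 c2 s1 P * v 2%nat) n.
Proof.
  intros HB.
  destruct n as [|[|[|[|[|[|[|n]]]]]]];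
  [ rewrite (lin_sum _ (fun _ => 0) 0 0 0 P v 0)
  | rewrite (lin_sum _ (fun _ => 0) 0 0 0 P v 0)
  | rewrite (lin_sum _ (fun _ => 1) 0 0 1 P v 0)
  | rewrite (lin_sum _ (fun _ => 1) 0 (-1) 0 P v 0)
  | rewrite (lin_sum _ (fun _ => 0) 0 0 0 P v 0)
  | rewrite (lin_sum _ (fun x => sqrt (c2^2 + 2*s1*x)) 0 0 1 P v (s1 / lam2 c2 s1 P))
  | rewrite (lin_sum _ (fun x => - sqrt (c2^2 + 2*s1*x)) 0 1 0 P v (- (s1 / lam2 c2 s1 P)))
  | rewrite (lin_sum _ (fun _ => 0) 0 0 0 P v 0) ]; lin_tac.
Qed.


Lemma main_ids c1 c2 s0 s1 (P : pt) :
  0 < DDf c1 c2 s0 s1 (P 1%nat) (P 2%nat ^2 + P 3%nat ^2) ->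
  0 < (Af c1 s0 (P 1%nat) + Bf c2 s1 (P 1%nat))/2 - sqrt (DDf c1 c2 s0 s1 (P 1%nat) (P 2%nat ^2 + P 3%nat ^2))/2 ->
  0 < Bf c2 s1 (P 1%nat) ->
     (forall i : nat, (i = 1%nat \/ i = 6%nat) ->
        gamma c1 c2 s0 s1 i 2 3 P + gamma c1 c2 s0 s1 i 3 2 P = 0 /\
        gamma c1 c2 s0 s1 i 4 5 P + gamma c1 c2 s0 s1 i 5 4 P = 0) /\
     (- ccoef c1 c2 s0 s1 3 2 P + gamma c1 c2 s0 s1 3 3 2 P = 0 /\
      gamma c1 c2 s0 s1 3 4 5 P + gamma c1 c2 s0 s1 3 5 4 P = 0) /\
     (- ccoef c1 c2 s0 s1 4 5 P + gamma c1 c2 s0 s1 4 4 5 P = 0 /\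
      gamma c1 c2 s0 s1 4 2 3 P + gamma c1 c2 s0 s1 4 3 2 P = 0).
Proof.
  intros HD HA HB.
  assert (D32 : forall n, dirD (r c1 c2 s0 s1 3) (r c1 c2 s0 s1 2) P n =
     vec6 0 (P 3%nat) (- P 2%nat) 0 ((-1) * lam3 c1 c2 s0 s1 P * P 3%nat) (- ((-1) * lam3 c1 c2 s0 s1 P * P 2%nat)) n).
  { intro n. unfold dirD. apply dirD_rot; auto. }
  assert (D45 : forall n, dirD (r c1 c2 s0 s1 4) (r c1 c2 s0 s1 5) P n =
     vec6 0 (P 3%nat) (- P 2%nat) 0 (1 * lam3 c1 c2 s0 s1 P * P 3%nat) (- (1 * lam3 c1 c2 s0 s1 P * P 2%nat)) n).
  { intro n. unfold dirD. apply dirD_rot; auto. }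
  assert (D23 : forall n, dirD (r c1 c2 s0 s1 2) (r c1 c2 s0 s1 3) P n =
    vec6 0 (r c1 c2 s0 s1 3 P 3%nat) (- r c1 c2 s0 s1 3 P 2%nat) 0
    (- (r c1 c2 s0 s1 3 P 1%nat * (s1 / lam2 c2 s1 P)) * P 3%nat -
     lam2 c2 s1 P * r c1 c2 s0 s1 3 P 3%nat)
    (r c1 c2 s0 s1 3 P 1%nat * (s1 / lam2 c2 s1 P) * P 2%nat +
     lam2 c2 s1 P * r c1 c2 s0 s1 3 P 2%nat) n).
  { intro n. unfold dirD. apply dirD_lin2; auto. }
  assert (D54 : forall n, dirD (r c1 c2 s0 s1 5) (r c1 c2 s0 s1 4) P n =
    vec6 0 (r c1 c2 s0 s1 4 P 3%nat) (- r c1 c2 s0 s1 4 P 2%nat) 0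
    (r c1 c2 s0 s1 4 P 1%nat * (s1 / lam2 c2 s1 P) * P 3%nat +
     lam2 c2 s1 P * r c1 c2 s0 s1 4 P 3%nat)
    (- (r c1 c2 s0 s1 4 P 1%nat * (s1 / lam2 c2 s1 P)) * P 2%nat -
     lam2 c2 s1 P * r c1 c2 s0 s1 4 P 2%nat) n).
  { intro n. unfold dirD. apply dirD_lin5; auto. }
  assert (C32 : ccoef c1 c2 s0 s1 3 2 P = 0).
  { transitivity (sum6 (fun j => r c1 c2 s0 s1 2 P j * pd (lam c1 c2 s0 s1 3) P j)).
    { unfold ccoef, sum6; ring. }
    rewrite (rot_sum _ (L3f c1 c2 s0 s1) 1 0 0).
    - ring.
    - intro Q. simpl lam. rewrite lam3_eq. ring.
    - apply L3_ex; auto.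
    all: reflexivity. }
  assert (C45 : ccoef c1 c2 s0 s1 4 5 P = 0).
  { transitivity (sum6 (fun j => r c1 c2 s0 s1 5 P j * pd (lam c1 c2 s0 s1 4) P j)).
    { unfold ccoef, sum6; ring. }
    rewrite (rot_sum _ (fun x S => - L3f c1 c2 s0 s1 x S) 1 0 0).
    - ring.
    - intro Q. simpl lam. rewrite lam3_eq. ring.
    - assert (HL := L3_ex c1 c2 s0 s1 _ _ HD HA). auto_derive. auto.
    all: reflexivity. }
  split; [intros i [-> | ->]; split | split; split].
  all: unfold gamma, dot6, sum6; cbv beta iota delta [Nat.eqb];
       rewrite ?C32, ?C45, ?D32, ?D45, ?D23, ?D54;
       cbv beta iota zeta delta [vec6 l lA r rA lam]; unfold Rdiv; ring.
Qed.

Lemma bnd_aux (L2 L3 U2 T2 X : R) :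
  0 < L2 -> L3 ^ 2 <= U2 -> (/ L2) ^ 2 <= T2 ->
  (X = L3 / L2 - (L3^2 - L2^2) / (4 * L2^2) \/ X = (L3 - L2) / (2 * L2) - (L3^2 - L2^2) / (4 * L2^2)) ->
  Rabs X <= (U2 + T2) / 2 + 1 + U2 * T2.
Proof.
  intros H2 HU HT HX.
  set (t := / L2).
  assert (Ht : L2 * t = 1) by (unfold t; field; lra).
  assert (Hw0 : 0 <= L3^2 * t^2) by (apply Rmult_le_pos; apply pow2_ge_0).
  assert (Hw1 : L3^2 * t^2 <= U2 * T2).
  { apply Rmult_le_compat; try apply pow2_ge_0; auto. }
  assert (Hp1 : 0 <= (L3 - t)^2) by apply pow2_ge_0.
  assert (Hp2 : 0 <= (L3 + t)^2) by apply pow2_ge_0.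
  replace ((L3 - t)^2) with (L3^2 - 2*(L3*t) + t^2) in Hp1 by ring.
  replace ((L3 + t)^2) with (L3^2 + 2*(L3*t) + t^2) in Hp2 by ring.
  assert (Ha1 : L3 * t <= (U2 + T2)/2) by (fold t in HT; lra).
  assert (Ha2 : - ((U2 + T2)/2) <= L3 * t) by (fold t in HT; lra).
  assert (E1 : L3 / L2 - (L3^2 - L2^2) / (4 * L2^2) = L3 * t - (L3^2*t^2 - 1)/4) by (unfold t; field; lra).
  assert (E2 : (L3 - L2) / (2 * L2) - (L3^2 - L2^2) / (4 * L2^2) = (L3 * t)/2 - 1/2 - (L3^2*t^2 - 1)/4)
    by (unfold t; field; lra).
  assert (HU0 : 0 <= U2) by (eapply Rle_trans; [apply pow2_ge_0|exact HU]).
  assert (HT0 : 0 <= T2) by (eapply Rle_trans; [apply pow2_ge_0|exact HT]).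
  assert (0 <= U2 * T2) by (apply Rmult_le_pos; auto).
  apply Rabs_le. destruct HX as [-> | ->]; [rewrite E1 | rewrite E2]; split; lra.
Qed.

Lemma main_bnd c1 c2 s0 s1 (P : pt) U2 T2 :
  0 < DDf c1 c2 s0 s1 (P 1%nat) (P 2%nat ^2 + P 3%nat ^2) ->
  0 < (Af c1 s0 (P 1%nat) + Bf c2 s1 (P 1%nat))/2 - sqrt (DDf c1 c2 s0 s1 (P 1%nat) (P 2%nat ^2 + P 3%nat ^2))/2 ->
  0 < Bf c2 s1 (P 1%nat) -> s1 <> 0 -> P 2%nat ^ 2 + P 3%nat ^ 2 > 0 ->
  lam3 c1 c2 s0 s1 P ^ 2 <= U2 -> (/ lam2 c2 s1 P) ^ 2 <= T2 ->
     let C := (U2 + T2) / 2 + 1 + U2 * T2 in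
     let D := Rabs (lam c1 c2 s0 s1 2 P - lam c1 c2 s0 s1 3 P) in
     Rabs (- ccoef c1 c2 s0 s1 2 3 P + gamma c1 c2 s0 s1 2 2 3 P) <= C * D /\
     Rabs (gamma c1 c2 s0 s1 2 4 5 P + gamma c1 c2 s0 s1 2 5 4 P) <= C * D /\
     Rabs (- ccoef c1 c2 s0 s1 5 4 P + gamma c1 c2 s0 s1 5 5 4 P) <= C * D /\
     Rabs (gamma c1 c2 s0 s1 5 2 3 P + gamma c1 c2 s0 s1 5 3 2 P) <= C * D.
Proof.
  intros HD HA HB Hs1 HS HU HT C D.
  assert (D32 : forall n, dirD (r c1 c2 s0 s1 3) (r c1 c2 s0 s1 2) P n =
     vec6 0 (P 3%nat) (- P 2%nat) 0 ((-1) * lam3 c1 c2 s0 s1 P * P 3%nat) (- ((-1) * lam3 c1 c2 s0 s1 P * P 2%nat)) n).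
  { intro n. unfold dirD. apply dirD_rot; auto. }
  assert (D45 : forall n, dirD (r c1 c2 s0 s1 4) (r c1 c2 s0 s1 5) P n =
     vec6 0 (P 3%nat) (- P 2%nat) 0 (1 * lam3 c1 c2 s0 s1 P * P 3%nat) (- (1 * lam3 c1 c2 s0 s1 P * P 2%nat)) n).
  { intro n. unfold dirD. apply dirD_rot; auto. }
  assert (D23 : forall n, dirD (r c1 c2 s0 s1 2) (r c1 c2 s0 s1 3) P n =
    vec6 0 (r c1 c2 s0 s1 3 P 3%nat) (- r c1 c2 s0 s1 3 P 2%nat) 0
    (- (r c1 c2 s0 s1 3 P 1%nat * (s1 / lam2 c2 s1 P)) * P 3%nat -
     lam2 c2 s1 P * r c1 c2 s0 s1 3 P 3%nat)
    (r c1 c2 s0 s1 3 P 1%nat * (s1 / lam2 c2 s1 P) * P 2%nat +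
     lam2 c2 s1 P * r c1 c2 s0 s1 3 P 2%nat) n).
  { intro n. unfold dirD. apply dirD_lin2; auto. }
  assert (D54 : forall n, dirD (r c1 c2 s0 s1 5) (r c1 c2 s0 s1 4) P n =
    vec6 0 (r c1 c2 s0 s1 4 P 3%nat) (- r c1 c2 s0 s1 4 P 2%nat) 0
    (r c1 c2 s0 s1 4 P 1%nat * (s1 / lam2 c2 s1 P) * P 3%nat +
     lam2 c2 s1 P * r c1 c2 s0 s1 4 P 3%nat)
    (- (r c1 c2 s0 s1 4 P 1%nat * (s1 / lam2 c2 s1 P)) * P 2%nat -
     lam2 c2 s1 P * r c1 c2 s0 s1 4 P 2%nat) n).
  { intro n. unfold dirD. apply dirD_lin5; auto. }
  assert (C23 : ccoef c1 c2 s0 s1 2 3 P = r c1 c2 s0 s1 3 P 1%nat * (s1 / lam2 c2 s1 P)).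
  { transitivity (sum6 (fun j => r c1 c2 s0 s1 3 P j * pd (lam c1 c2 s0 s1 2) P j)).
    { unfold ccoef, sum6; ring. }
    rewrite (lin_sum _ (fun x => sqrt (c2^2 + 2*s1*x)) 1 0 0 P _ (s1 / lam2 c2 s1 P)).
    - ring.
    - intro Q. cbv beta iota delta [lam]. unfold lam2, b_. ring.
    - apply dK2; auto. }
  assert (C54 : ccoef c1 c2 s0 s1 5 4 P = - (r c1 c2 s0 s1 4 P 1%nat * (s1 / lam2 c2 s1 P))).
  { transitivity (sum6 (fun j => r c1 c2 s0 s1 4 P j * pd (lam c1 c2 s0 s1 5) P j)).
    { unfold ccoef, sum6; ring. }
    rewrite (lin_sum _ (fun x => - sqrt (c2^2 + 2*s1*x)) 1 0 0 P _ (- (s1 / lam2 c2 s1 P))).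
    - ring.
    - intro Q. cbv beta iota delta [lam]. unfold lam2, b_. ring.
    - apply dK2n; auto. }
  assert (HL2 : 0 < lam2 c2 s1 P) by (apply sqrt_lt_R0; exact HB).
  assert (Hb : b_ c2 s1 P = lam2 c2 s1 P ^ 2).
  { unfold lam2. rewrite pow2_sqrt; [reflexivity | unfold Bf, b_ in *; lra]. }
  set (L2 := lam2 c2 s1 P) in *. set (L3 := lam3 c1 c2 s0 s1 P) in *.
  set (X1 := L3 / L2 - (L3^2 - L2^2) / (4 * L2^2)).
  set (X2 := (L3 - L2) / (2 * L2) - (L3^2 - L2^2) / (4 * L2^2)).
  assert (B1 : Rabs X1 <= C) by (apply (bnd_aux L2 L3); auto).
  assert (B2 : Rabs X2 <= C) by (apply (bnd_aux L2 L3); auto).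
  assert (HM : Mc P <> 0) by (unfold Mc; lra).
  assert (key : forall Q X, Q = (L2 - L3) * X \/ Q = (L2 - L3) * (- X) -> Rabs X <= C -> Rabs Q <= C * D).
  { intros Q X HQ HX. unfold D. cbv beta iota delta [lam]. fold L2 L3.
    destruct HQ as [-> | ->]; rewrite Rabs_mult, ?Rabs_Ropp, Rmult_comm;
      apply Rmult_le_compat_r; auto; apply Rabs_pos. }
  split; [|split; [|split]].
  - apply (key _ X1); auto. left. unfold gamma, dot6, sum6; cbv beta iota delta [Nat.eqb].
    rewrite C23, !D23, !D32. cbv beta iota zeta delta [vec6 l lA r rA lam]. fold L2 L3. rewrite Hb.
    unfold X1, Mc in *. field; repeat split; try lra; auto.
  - apply (key _ X2); auto. left. unfold gamma, dot6, sum6; cbv beta iota delta [Nat.eqb].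
    rewrite !D45, !D54. cbv beta iota zeta delta [vec6 l lA r rA lam]. fold L2 L3. rewrite Hb.
    unfold X2, Mc in *. field; repeat split; try lra; auto.
  - apply (key _ X1); auto. right. unfold gamma, dot6, sum6; cbv beta iota delta [Nat.eqb].
    rewrite C54, !D45, !D54. cbv beta iota zeta delta [vec6 l lA r rA lam]. fold L2 L3. rewrite Hb.
    unfold X1, Mc in *. field; repeat split; try lra; auto.
  - apply (key _ X2); auto. right. unfold gamma, dot6, sum6; cbv beta iota delta [Nat.eqb].
    rewrite !D23, !D32. cbv beta iota zeta delta [vec6 l lA r rA lam]. fold L2 L3. rewrite Hb.
    unfold X2, Mc in *. field; repeat split; try lra; auto.
Qed.

Lemma norm6_bound (P : pt) (d : R) : 0 < d -> norm6 P < d ->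
  P 1%nat ^ 2 + P 2%nat ^ 2 + P 3%nat ^ 2 < d ^ 2.
Proof.
  intros Hd H. unfold norm6 in H. set (s := sum6 (fun j => P j ^ 2)) in *.
  assert (Hs : P 1%nat ^ 2 + P 2%nat ^ 2 + P 3%nat ^ 2 <= s).
  { unfold s, sum6. assert (H4 := pow2_ge_0 (P 4%nat)). assert (H5 := pow2_ge_0 (P 5%nat)).
    assert (H6 := pow2_ge_0 (P 6%nat)). lra. }
  assert (Hs0 : 0 <= s) by (eapply Rle_trans; [|exact Hs]; 
     assert (H1 := pow2_ge_0 (P 1%nat)); assert (H2 := pow2_ge_0 (P 2%nat)); assert (H3 := pow2_ge_0 (P 3%nat)); lra).
  assert (E : s = sqrt s ^ 2) by (rewrite pow2_sqrt; auto).
  assert (Hq := sqrt_pos s).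
  assert (s < d ^ 2) by (rewrite E; nra).
  lra.
Qed.

Lemma abs_bnd (s x m e : R) : Rabs s <= m -> Rabs x < e -> 0 <= m -> Rabs (s * x) <= m * e.
Proof.
  intros H1 H2 H3. rewrite Rabs_mult. apply Rmult_le_compat; try apply Rabs_pos; lra.
Qed.

Lemma abs_le_inv a b : Rabs a <= b -> - b <= a <= b.
Proof. intros H. assert (H1 := Rle_abs a). assert (H2 := Rle_abs (- a)). rewrite Rabs_Ropp in H2. lra. Qed.

Theorem proposition3p2 (c1 c2 s0 s1 : R) :
  c1 > c2 -> c2 > 0 -> s0 * s1 <> 0 ->
  exists delta0 : R, 0 < delta0 /\
  forall delta : R, 0 < delta < delta0 ->
  (forall P : pt, norm6 P < 2 * delta -> P 2%nat ^ 2 + P 3%nat ^ 2 > 0 ->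
     (forall i : nat, (i = 1%nat \/ i = 6%nat) ->
        gamma c1 c2 s0 s1 i 2 3 P + gamma c1 c2 s0 s1 i 3 2 P = 0 /\
        gamma c1 c2 s0 s1 i 4 5 P + gamma c1 c2 s0 s1 i 5 4 P = 0) /\
     (- ccoef c1 c2 s0 s1 3 2 P + gamma c1 c2 s0 s1 3 3 2 P = 0 /\
      gamma c1 c2 s0 s1 3 4 5 P + gamma c1 c2 s0 s1 3 5 4 P = 0) /\
     (- ccoef c1 c2 s0 s1 4 5 P + gamma c1 c2 s0 s1 4 4 5 P = 0 /\
      gamma c1 c2 s0 s1 4 2 3 P + gamma c1 c2 s0 s1 4 3 2 P = 0)) /\
  (exists C : R, forall P : pt, norm6 P < 2 * delta -> P 2%nat ^ 2 + P 3%nat ^ 2 > 0 ->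
     let D := Rabs (lam c1 c2 s0 s1 2 P - lam c1 c2 s0 s1 3 P) in
     Rabs (- ccoef c1 c2 s0 s1 2 3 P + gamma c1 c2 s0 s1 2 2 3 P) <= C * D /\
     Rabs (gamma c1 c2 s0 s1 2 4 5 P + gamma c1 c2 s0 s1 2 5 4 P) <= C * D /\
     Rabs (- ccoef c1 c2 s0 s1 5 4 P + gamma c1 c2 s0 s1 5 5 4 P) <= C * D /\
     Rabs (gamma c1 c2 s0 s1 5 2 3 P + gamma c1 c2 s0 s1 5 3 2 P) <= C * D).
Proof.
  intros Hc12 Hc2 Hs.
  assert (Hs1 : s1 <> 0) by (intro E; apply Hs; rewrite E; ring).
  set (eps := c2 ^ 2).
  assert (Heps : 0 < eps) by (unfold eps; nra).
  assert (Hc1sq : eps < c1 ^ 2) by (unfold eps; nra).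
  set (m := Rabs s0 + Rabs s1 + 1).
  assert (Hm : 1 <= m) by (unfold m; assert (H1 := Rabs_pos s0); assert (H2 := Rabs_pos s1); lra).
  assert (Hm0 : Rabs s0 <= m) by (unfold m; assert (H2 := Rabs_pos s1); lra).
  assert (Hm1 : Rabs s1 <= m) by (unfold m; assert (H2 := Rabs_pos s0); lra).
  exists (eps / (8 * m)). split.
  { apply Rdiv_lt_0_compat; lra. }
  intros delta [Hd0 Hd1].
  assert (Hmd : m * delta < eps / 8).
  { apply (Rmult_lt_compat_l m) in Hd1; [|lra]. replace (m * (eps / (8*m))) with (eps/8) in Hd1 by (field; lra). exact Hd1. }
  assert (facts : forall P : pt, norm6 P < 2 * delta -> P 2%nat ^ 2 + P 3%nat ^ 2 > 0 ->
    0 < DDf c1 c2 s0 s1 (P 1%nat) (P 2%nat ^2 + P 3%nat ^2) /\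
    0 < (Af c1 s0 (P 1%nat) + Bf c2 s1 (P 1%nat))/2 - sqrt (DDf c1 c2 s0 s1 (P 1%nat) (P 2%nat ^2 + P 3%nat ^2))/2 /\
    0 < Bf c2 s1 (P 1%nat) /\
    lam3 c1 c2 s0 s1 P ^ 2 <= c1 ^ 2 + c2 ^ 2 /\ (/ lam2 c2 s1 P) ^ 2 <= 2 / eps).
  { intros P HP HS.
    assert (Hn := norm6_bound P (2 * delta) ltac:(lra) HP).
    set (x := P 1%nat) in *. set (S := P 2%nat ^ 2 + P 3%nat ^ 2) in *.
    assert (Hx2 : x ^ 2 < (2 * delta) ^ 2) by (unfold S in HS; lra).
    assert (HS2 : S < (2 * delta) ^ 2) by (assert (H1 := pow2_ge_0 x); unfold S in *; lra).
    assert (Hax : Rabs x < 2 * delta).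
    { apply Rabs_def1; nra. }
    assert (B0 : Rabs (s0 * x) <= m * (2 * delta)) by (apply abs_bnd; lra).
    assert (B1 : Rabs (s1 * x) <= m * (2 * delta)) by (apply abs_bnd; lra).
    apply abs_le_inv in B0. apply abs_le_inv in B1.
    assert (HA0 : eps / 2 < Af c1 s0 x) by (unfold Af; lra).
    assert (HB0 : eps / 2 < Bf c2 s1 x) by (unfold Bf; change (c2^2) with eps; lra).
    assert (Hs1sq : s1 ^ 2 <= m ^ 2).
    { rewrite <- (pow2_abs s1). assert (H := Rabs_pos s1). nra. }
    assert (HsS : 16 * s1 ^ 2 * S < eps ^ 2).
    { assert (0 <= s1 ^ 2) by apply pow2_ge_0.
      assert (s1 ^ 2 * S <= m ^ 2 * S) by (apply Rmult_le_compat_r; lra).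
      assert (m ^ 2 * S <= m ^ 2 * (2*delta)^2) by (apply Rmult_le_compat_l; [apply pow2_ge_0|lra]).
      assert (0 < m * delta) by nra.
      assert ((m*delta)^2 < (eps/8)^2) by nra.
      nra. }
    assert (HDpos : 0 < DDf c1 c2 s0 s1 x S).
    { unfold DDf. assert (0 < s1 * s1) by (apply Rsqr_pos_lt; auto).
      assert (0 < s1 ^ 2) by (replace (s1^2) with (s1*s1) by ring; auto).
      assert (0 <= (Af c1 s0 x - Bf c2 s1 x) ^ 2) by apply pow2_ge_0.
      assert (0 < s1 ^ 2 * S) by (apply Rmult_lt_0_compat; lra). nra. }
    assert (HDlt : DDf c1 c2 s0 s1 x S < (Af c1 s0 x + Bf c2 s1 x) ^ 2).
    { unfold DDf. assert (eps/2 * (eps/2) < Af c1 s0 x * Bf c2 s1 x) by (apply Rmult_le_0_lt_compat; lra). nra. }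
    assert (Hsq : sqrt (DDf c1 c2 s0 s1 x S) < Af c1 s0 x + Bf c2 s1 x).
    { rewrite <- (sqrt_pow2 (Af c1 s0 x + Bf c2 s1 x)) by lra.
      apply sqrt_lt_1; try lra; try apply pow2_ge_0. }
    assert (HL3 : lam3 c1 c2 s0 s1 P ^ 2 = (Af c1 s0 x + Bf c2 s1 x)/2 - sqrt (DDf c1 c2 s0 s1 x S)/2).
    { rewrite lam3_eq. unfold L3f. fold x S. rewrite pow2_sqrt; [reflexivity| lra]. }
    assert (HL2 : (/ lam2 c2 s1 P) ^ 2 = / Bf c2 s1 x).
    { unfold lam2, b_. fold x. assert (Hb0 : 0 < c2^2 + 2*s1*x) by (unfold Bf in HB0; lra). rewrite <- Rinv_pow by (apply Rgt_not_eq, sqrt_lt_R0; exact Hb0). rewrite pow2_sqrt by lra. reflexivity. }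
    split; [exact HDpos|]. split; [lra|]. split; [lra|]. split.
    - rewrite HL3. assert (H := sqrt_pos (DDf c1 c2 s0 s1 x S)). unfold Af, Bf in *. unfold eps in *. lra.
    - rewrite HL2. apply Rle_trans with (/ (eps / 2)).
      + apply Rlt_le, Rinv_lt_contravar; [apply Rmult_lt_0_compat|]; lra.
      + right. field. lra. }
  split.
  - intros P HP HS. destruct (facts P HP HS) as (HD & HA & HB & _).
    apply main_ids; auto.
  - exists ((c1 ^ 2 + c2 ^ 2 + 2 / eps) / 2 + 1 + (c1 ^ 2 + c2 ^ 2) * (2 / eps)).
    intros P HP HS. destruct (facts P HP HS) as (HD & HA & HB & HU & HT).
    apply (main_bnd c1 c2 s0 s1 P); auto.
Qed.
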